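(* Assume that for some $a_1>0$ and a constant $C>0$, with probability tending to one, $\max_{j\in[p]}\|\widehat{\partial_jm}-\partial_jm\|_2^2\le Cn^{-a_1}$, and let $a_2,b>0$. Then: (a) for every node $v\notin\mathcal I^\star$ there is $c>0$ such that $P\big(\hat w_v\ge c\, n^{\min(a_1,a_2)b}\big)\to1$; (b) for every node $v\in\mathcal I^\star$, $\hat w_v=O_P\big(1+n^{(a_2-a_1)b}\big)$.
   Context: A known rooted tree $\mathcal T$ with $T$ nodes has exactly $p$ leaves, identified with the coordinates $1,\dots,p$ of $X\in\mathbb R^p$, where $Y=m(X)+\varepsilon$ for a differentiable regression function $m$. For a node $v$, $\mathrm{le}(v)$ denotes the set of leaves that are equal to $v$ or are descendants of $v$; $\mathrm{sib}(v)$ denotes the set of nodes $u\neq v$ having the same parent as $v$ (empty for the root). Derivatives and norms. $\partial_j m$ is the partial derivative of $m$ w.r.t. the $j$-th coordinate of $X$ ($j=1,\dots,p$), and $\|f\|_2$ is the $L^2(P_X)$ norm; statements ''$\partial_jm=\partial_km$'', ''$\partial_jm\neq0$'' are meant as elements of $L^2(P_X)$. $\widehat{\partial_jm}$ are (data-dependent) pilot estimators of $\partial_jm$. Target aggregation set. $\mathcal I^\star$ is the set of nodes $v$ such that: (i) $\partial_jm\neq0$ for all $j\in\mathrm{le}(v)$; (ii) $\partial_jm=\partial_km$ for all $j,k\in\mathrm{le}(v)$; (iii) there exist $s\in\bigcup_{u\in\mathrm{sib}(v)}\mathrm{le}(u)$ and $j\in\mathrm{le}(v)$ with $\partial_sm\neq\partial_jm$.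 Adaptive weights. For each node $v$ set $C_{v,1}=\binom{|\mathrm{le}(v)|}{2}^{-1}\sum_{\{j,k\}\subseteq\mathrm{le}(v),\,j\ne k}\|\widehat{\partial_jm}-\widehat{\partial_km}\|_2^2$ (and $C_{v,1}=0$ if $|\mathrm{le}(v)|=1$), $C_{v,2}=|\mathrm{le}(v)|^{-1}\sum_{j\in\mathrm{le}(v)}\|\widehat{\partial_jm}\|_2^2$, $C_{v,3}=\big(|S_v|\,|\mathrm{le}(v)|\big)^{-1}\sum_{j\in\mathrm{le}(v)}\sum_{l\in S_v}\|\widehat{\partial_jm}-\widehat{\partial_lm}\|_2^2$ with $S_v=\bigcup_{u\in\mathrm{sib}(v)}\mathrm{le}(u)$ (and $C_{v,3}=0$ if $S_v=\emptyset$), and $\hat w_v=(n^{a_2}C_{v,1})^b+C_{v,2}^{-b}+C_{v,3}^{-b}$ (with $0^{-b}=+\infty$). *)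

(* Defs.v *)
From HB Require Import structures.
From mathcomp Require Import all_boot all_order all_algebra.
From mathcomp Require Import all_classical all_reals all_analysis.
Set Implicit Arguments. Unset Strict Implicit. Unset Printing Implicit Defensive.
Import Order.TTheory GRing.Theory Num.Theory.
Import numFieldNormedType.Exports.
Local Open Scope classical_set_scope.
Local Open Scope ring_scope.

(* Nodes are 'I_T; [par v] is the parent of v (None for the root).      *)
Definition par_rel (T : nat) (par : 'I_T -> option 'I_T) : rel 'I_T :=
  fun u w => par u == Some w.

(* [anc par u v] : v is equal to u or is an ancestor of u. *)
Definition anc (T : nat) (par : 'I_T -> option 'I_T) (u v : 'I_T) : bool :=
  connect (par_rel par) u v.

(* par describes a rooted tree: a root r without parent, reached from every node
   by following parents (this forces acyclicity). *)
Definition is_rooted_tree (T : nat) (par : 'I_T -> option 'I_T) : Prop :=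
  exists r : 'I_T, par r = None /\ forall v, anc par v r.

Definition is_leaf (T : nat) (par : 'I_T -> option 'I_T) (v : 'I_T) : bool :=
  [forall u, par u != Some v].

Definition leaves_identified (T p : nat) (par : 'I_T -> option 'I_T)
  (leaf : 'I_p -> 'I_T) : Prop :=
  injective leaf /\ (forall v, is_leaf par v <-> exists j, leaf j = v).

Definition le_set (T p : nat) (par : 'I_T -> option 'I_T) (leaf : 'I_p -> 'I_T)
  (v : 'I_T) : {set 'I_p} := [set j | anc par (leaf j) v].

Definition sib (T : nat) (par : 'I_T -> option 'I_T) (v : 'I_T) : {set 'I_T} :=
  [set u | (u != v) && (par v != None) && (par u == par v)].

Definition S_set (T p : nat) (par : 'I_T -> option 'I_T) (leaf : 'I_p -> 'I_T)
  (v : 'I_T) : {set 'I_p} := \bigcup_(u in sib par v) le_set par leaf u.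

(* P_X is the law of X : Omega -> R^p under P, so
   ||f||_{L^2(P_X)} = ( \int |f(X w)|^2 dP(w) )^{1/2}. *)
Definition L2norm {R : realType} {d} {Omega : measurableType d} {p : nat}
  (P : probability Omega R) (X : Omega -> 'rV[R]_p) (f : 'rV[R]_p -> R) : \bar R :=
  Lnorm P 2%:E (EFin \o (f \o X)).

Definition inL2 {R : realType} {d} {Omega : measurableType d} {p : nat}
  (P : probability Omega R) (X : Omega -> 'rV[R]_p) (f : 'rV[R]_p -> R) : Prop :=
  measurable_fun [set: Omega] (f \o X) /\ (L2norm P X f < +oo)%E.

(* real-valued L^2 norm (meaningful for elements of L^2) *)
Definition nrm2 {R : realType} {d} {Omega : measurableType d} {p : nat}
  (P : probability Omega R) (X : Omega -> 'rV[R]_p) (f : 'rV[R]_p -> R) : R :=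
  fine (L2norm P X f).

Definition partial {R : realType} {p : nat} (m : 'rV[R]_p -> R) (j : 'I_p)
  : 'rV[R]_p -> R := fun x => 'D_(delta_mx 0 j) m x.

Definition in_Istar {R : realType} {d} {Omega : measurableType d} {T p : nat}
  (P : probability Omega R) (X : Omega -> 'rV[R]_p)
  (par : 'I_T -> option 'I_T) (leaf : 'I_p -> 'I_T)
  (D : 'I_p -> 'rV[R]_p -> R) (v : 'I_T) : Prop :=
  [/\ (forall j, j \in le_set par leaf v -> nrm2 P X (D j) <> 0),
      (forall j k, j \in le_set par leaf v -> k \in le_set par leaf v ->
          nrm2 P X (D j \- D k) = 0) &
      (exists s j, [/\ s \in S_set par leaf v, j \in le_set par leaf v &
          nrm2 P X (D s \- D j) <> 0])].

Section Weights.
Context {R : realType} {d} {Omega : measurableType d} {T p : nat}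
  (P : probability Omega R) (X : Omega -> 'rV[R]_p)
  (par : 'I_T -> option 'I_T) (leaf : 'I_p -> 'I_T)
  (E : 'I_p -> 'rV[R]_p -> R) .

Let sq (f : 'rV[R]_p -> R) : R := (nrm2 P X f) ^+ 2.

Definition C1 (v : 'I_T) : R :=
  let L := le_set par leaf v in
  if #|L| == 1%N then 0 else
  ('C(#|L|, 2)%:R)^-1 * \sum_(j in L) \sum_(k in L | (j < k)%N) sq (E j \- E k).

Definition C2 (v : 'I_T) : R :=
  let L := le_set par leaf v in
  (#|L|%:R)^-1 * \sum_(j in L) sq (E j).

Definition C3 (v : 'I_T) : R :=
  let L := le_set par leaf v in
  let S := S_set par leaf v in
  if #|S| == 0%N then 0 else
  ((#|S| * #|L|)%:R)^-1 * \sum_(j in L) \sum_(l in S) sq (E j \- E l).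

Definition negpow (x b : R) : \bar R := if x == 0 then +oo%E else (x `^ (- b))%:E.

Definition what (n : nat) (a2 b : R) (v : 'I_T) : \bar R :=
  ((((n%:R `^ a2) * C1 v) `^ b)%:E + negpow (C2 v) b + negpow (C3 v) b)%E.
End Weights.

(* Events need not be measurable: we use inner probability. *)
Definition wp_to_one {R : realType} {d} {Omega : measurableType d}
  (P : probability Omega R) (A : nat -> set Omega) : Prop :=
  exists B : nat -> set Omega,
    (forall n, measurable (B n) /\ B n `<=` A n) /\
    (fun n => P (B n)) @ \oo --> 1%E.

Definition O_in_prob {R : realType} {d} {Omega : measurableType d}
  (P : probability Omega R) (Z : nat -> Omega -> \bar R) (r : nat -> R) : Prop :=
  forall eps : R, 0 < eps -> exists M : R, exists N : nat,
    forall n, (N <= n)%N -> exists B : set Omega,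
      [/\ measurable B, B `<=` [set w | (`|Z n w| <= (M * r n)%:E)%E]
        & (1 - eps)%:E <= P B]%E.

(* Main.v *)
Require Import Defs.
From HB Require Import structures.
From mathcomp Require Import all_boot all_order all_algebra.
From mathcomp Require Import all_classical all_reals all_analysis.
From mathcomp Require Import ring lra.
Import Order.TTheory GRing.Theory Num.Theory.
Import numFieldNormedType.Exports.
Local Open Scope classical_set_scope.
Local Open Scope ring_scope.



Section Norms.
Context {R : realType} {d} {Omega : measurableType d} {p : nat}
  (P : probability Omega R) (X : Omega -> 'rV[R]_p).
Local Notation N := (nrm2 P X).
Local Notation G := (inL2 P X).

Lemma N_ge0 f : 0 <= N f.
Proof. rewrite /nrm2; apply: fine_ge0; exact: Lnorm_ge0. Qed.

Lemma GD f g : G f -> G g -> G (f \+ g) /\ (N (f \+ g) <= N f + N g).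
Proof.
move=> [mf lf] [mg lg].
have mfg : measurable_fun [set: Omega] ((f \+ g) \o X).
  have -> : (f \+ g) \o X = (f \o X) \+ (g \o X) by [].
  exact: measurable_realfun.measurable_funD.
have H : (L2norm P X (f \+ g)%R <= L2norm P X f + L2norm P X g)%E.
  rewrite /L2norm.
  have -> : (f \+ g) \o X = ((f \o X) \+ (g \o X))%R by [].
  apply: minkowski_EFin => //; lra.
have hf0 := Lnorm_ge0 P 2%:E (EFin \o (f \o X)).
have hg0 := Lnorm_ge0 P 2%:E (EFin \o (g \o X)).
have hfg0 := Lnorm_ge0 P 2%:E (EFin \o ((f \+ g)%R \o X)).
have lfg : (L2norm P X (f \+ g)%R < +oo)%E.
  by apply: (le_lt_trans H); rewrite lte_add_pinfty.
split; first by split.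
rewrite /nrm2 -lee_fin.
rewrite fineK; last by rewrite ge0_fin_numE.
rewrite EFinD !fineK ?ge0_fin_numE //.
Qed.

Lemma GN f : G f -> G (\- f) /\ N (\- f) = N f.
Proof.
move=> [mf lf].
have e : L2norm P X (\- f) = L2norm P X f.
  rewrite /L2norm -oppe_Lnorm; apply: eq_Lnorm => x /=; by rewrite ?opprK ?EFinN ?oppeK.
split; last by rewrite /nrm2 e.
split; last by rewrite e.
have -> : (\- f) \o X = \- (f \o X) by [].
exact: measurableT_comp.
Qed.

Lemma GB f g : G f -> G g -> G (f \- g).
Proof. move=> hf hg; have [hg' _] := @GN g hg; exact: (@GD f (\- g) hf hg').1. Qed.

Lemma N_eq f g : f =1 g -> N f = N g.
Proof. by move=> /funext ->. Qed.

Lemma N_sym f g : N (f \- g) = N (g \- f).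
Proof.
rewrite /nrm2 /L2norm -oppe_Lnorm; congr fine; apply: eq_Lnorm => x /=.
by rewrite opprB.
Qed.

Lemma N_tri f g h : G f -> G g -> G h -> N (f \- g) <= N (f \- h) + N (h \- g).
Proof.
move=> hf hg hh.
have := (GD _ _ (GB _ _ hf hh) (GB _ _ hh hg)).2.
by rewrite (@N_eq _ (f \- g)) // => x /=; rewrite addrA subrK.
Qed.

Lemma N_tri0 f g : G f -> G g -> N f <= N (f \- g) + N g.
Proof.
move=> hf hg; have := (GD _ _ (GB _ _ hf hg) hg).2.
by rewrite (@N_eq _ f) // => x /=; rewrite subrK.
Qed.
Lemma N_self f : N (f \- f) = 0.
Proof.
rewrite /nrm2 /L2norm (@eq_Lnorm _ _ _ _ _ _ (cst 0%E)); last first.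
  by move=> x /=; rewrite subrr.
by rewrite Lnorm0.
Qed.
End Norms.
Arguments N_tri {R d Omega p} P X {f g h}.
Arguments N_tri0 {R d Omega p} P X {f g}.
Arguments GB {R d Omega p} P X {f g}.



Section Sums.
Context {R : realType}.

Lemma sum_le_const (I : finType) (Pr : pred I) (F : I -> R) K :
  0 <= K -> (forall i, Pr i -> F i <= K) -> \sum_(i | Pr i) F i <= #|I|%:R * K.
Proof.
move=> K0 HF; rewrite big_mkcond /=.
apply: (@le_trans _ _ (\sum_(i : I) K)).
  apply: ler_sum => i _; case: ifP => // /HF //.
by rewrite sumr_const mulr_natl.
Qed.

Lemma sum_ge_one (I : finType) (Pr : pred I) (F : I -> R) i0 :
  Pr i0 -> (forall i, Pr i -> 0 <= F i) -> F i0 <= \sum_(i | Pr i) F i.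
Proof.
move=> Hi HF; rewrite (bigD1 i0) //= lerDl; apply: sumr_ge0 => i /andP[/HF] //.
Qed.

Lemma sum_ge0' (I : finType) (Pr : pred I) (F : I -> R) :
  (forall i, Pr i -> 0 <= F i) -> 0 <= \sum_(i | Pr i) F i.
Proof. by move=> HF; apply: sumr_ge0. Qed.

Lemma inv_le (n : nat) (x : R) : 0 <= x -> (n%:R)^-1 * x <= x.
Proof.
move=> x0; case: n => [|n]; first by rewrite invr0 mul0r.
have h1 : (n.+1%:R : R)^-1 <= 1 by rewrite invf_le1 ?ler1n ?ltr0n.
have h0 : 0 <= (n.+1%:R : R)^-1 by rewrite invr_ge0 ler0n.
by rewrite -[X in _ <= X]mul1r; apply: ler_wpM2r.
Qed.
End Sums.

Section CBounds.
Context {R : realType} {d} {Omega : measurableType d} {T p : nat}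
  (P : probability Omega R) (X : Omega -> 'rV[R]_p)
  (par : 'I_T -> option 'I_T) (leaf : 'I_p -> 'I_T)
  (E : 'I_p -> 'rV[R]_p -> R) (v : 'I_T).
Local Notation N := (nrm2 P X).
Local Notation L := (le_set par leaf v).
Local Notation S := (S_set par leaf v).
Local Notation sq f := (N f ^+ 2).

Lemma sq_ge0 f : 0 <= sq f.
Proof. exact: sqr_ge0. Qed.

Lemma C1_ge0 : 0 <= C1 P X par leaf E v.
Proof.
rewrite /C1 /=; case: ifP => // _; apply: mulr_ge0; first by rewrite invr_ge0.
by apply: sumr_ge0 => j _; apply: sumr_ge0 => k _; apply: sq_ge0.
Qed.

Lemma C2_ge0 : 0 <= C2 P X par leaf E v.
Proof.
rewrite /C2 /=; apply: mulr_ge0; first by rewrite invr_ge0.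
by apply: sumr_ge0 => j _; apply: sq_ge0.
Qed.

Lemma C3_ge0 : 0 <= C3 P X par leaf E v.
Proof.
rewrite /C3 /=; case: ifP => // _; apply: mulr_ge0; first by rewrite invr_ge0.
by apply: sumr_ge0 => j _; apply: sumr_ge0 => k _; apply: sq_ge0.
Qed.

Lemma C1_le K : 0 <= K ->
  (forall j k, j \in L -> k \in L -> sq (E j \- E k) <= K) ->
  C1 P X par leaf E v <= p%:R * (p%:R * K).
Proof.
move=> K0 HK; rewrite /C1 /=; case: ifP => _.
  by rewrite !mulr_ge0.
apply: (le_trans (inv_le _ _ _)).
  by apply: sumr_ge0 => j _; apply: sumr_ge0 => k _; apply: sq_ge0.
rewrite -[in X in _ <= X](card_ord p).
apply: sum_le_const; first by rewrite mulr_ge0.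
move=> j jL.
by apply: sum_le_const => // k /andP[kL _]; apply: HK.
Qed.

Lemma C2_le K : 0 <= K ->
  (forall j, j \in L -> sq (E j) <= K) -> C2 P X par leaf E v <= p%:R * K.
Proof.
move=> K0 HK; rewrite /C2 /=.
apply: (le_trans (inv_le _ _ _)).
  by apply: sumr_ge0 => j _; apply: sq_ge0.
rewrite -[in X in _ <= X](card_ord p).
exact: sum_le_const.
Qed.

Lemma C3_le K : 0 <= K ->
  (forall j l, j \in L -> l \in S -> sq (E j \- E l) <= K) ->
  C3 P X par leaf E v <= p%:R * (p%:R * K).
Proof.
move=> K0 HK; rewrite /C3 /=; case: ifP => _.
  by rewrite !mulr_ge0.
apply: (le_trans (inv_le _ _ _)).
  by apply: sumr_ge0 => j _; apply: sumr_ge0 => k _; apply: sq_ge0.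
rewrite -[in X in _ <= X](card_ord p).
apply: sum_le_const; first by rewrite mulr_ge0.
move=> j jL.
by apply: sum_le_const => // k kS; apply: HK.
Qed.

Lemma C1_ge j k : j \in L -> k \in L -> (j < k)%N ->
  ('C(#|L|, 2)%:R)^-1 * sq (E j \- E k) <= C1 P X par leaf E v.
Proof.
move=> jL kL jk; rewrite /C1 /=.
have c1 : (1 < #|L|)%N.
  apply/card_gt1P; exists j, k; split => //.
  by apply/eqP => ejk; move: jk; rewrite ejk ltnn.
rewrite ifF; last by apply/negbTE; rewrite neq_ltn c1 orbT.
apply: ler_wpM2l; first by rewrite invr_ge0.
apply: (le_trans _ (@sum_ge_one _ _ _ _ j jL _)).
  apply: (@sum_ge_one _ _ (fun k => (k \in L) && (j < k)%N)) => [|i _]; last exact: sq_ge0.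
  by rewrite kL jk.
by move=> i _; apply: sumr_ge0 => i' _; apply: sq_ge0.
Qed.

Lemma C2_ge j : j \in L ->
  (#|L|%:R)^-1 * sq (E j) <= C2 P X par leaf E v.
Proof.
move=> jL; rewrite /C2 /=.
apply: ler_wpM2l; first by rewrite invr_ge0.
by apply: (@sum_ge_one _ _ _ _ j jL) => i _; apply: sq_ge0.
Qed.

Lemma C3_ge j l : j \in L -> l \in S ->
  ((#|S| * #|L|)%:R)^-1 * sq (E j \- E l) <= C3 P X par leaf E v.
Proof.
move=> jL lS; rewrite /C3 /=.
have c1 : (0 < #|S|)%N by apply/card_gt0P; exists l.
rewrite ifF; last by apply/negbTE; rewrite -lt0n.
apply: ler_wpM2l; first by rewrite invr_ge0.
apply: (le_trans _ (@sum_ge_one _ _ _ _ j jL _)).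
  by apply: (@sum_ge_one _ _ _ _ l lS) => i _; apply: sq_ge0.
by move=> i _; apply: sumr_ge0 => i' _; apply: sq_ge0.
Qed.
End CBounds.



Section Err.
Context {R : realType} {d} {Omega : measurableType d} {p : nat}
  (P : probability Omega R) (X : Omega -> 'rV[R]_p)
  (E D : 'I_p -> 'rV[R]_p -> R) (eps : R)
  (hE : forall j, inL2 P X (E j)) (hD : forall j, inL2 P X (D j))
  (herr : forall j, nrm2 P X (E j \- D j) ^+ 2 <= eps).
Local Notation N := (nrm2 P X).

Lemma U1 j k : N (D j \- D k) = 0 -> N (E j \- E k) ^+ 2 <= 4 * eps.
Proof.
move=> h0.
have t1 := N_tri P X (hE j) (hE k) (hD j).
have t2 := N_tri P X (hD j) (hE k) (hD k).
have s : N (D k \- E k) = N (E k \- D k) by apply: N_sym.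
have a0 := N_ge0 P X (E j \- D j).
have b0 := N_ge0 P X (E k \- D k).
have x0 := N_ge0 P X (E j \- E k).
have ea := herr j; have eb := herr k.
rewrite h0 s in t2.
move: t1 t2 a0 b0 x0 ea eb.
set a := N (E j \- D j); set b := N (E k \- D k); set x := N (E j \- E k).
set y := N (D j \- E k) => t1 t2 a0 b0 x0 ea eb.
have hx : x <= a + b by lra.
have h1 : x ^+ 2 <= (a + b) ^+ 2 by rewrite ler_pXn2r // ?nnegrE; lra.
have h2 : (a + b) ^+ 2 <= 2 * a ^+ 2 + 2 * b ^+ 2.
  have := sqr_ge0 (a - b); rewrite !expr2; lra.
lra.
Qed.

Lemma U2 j : N (D j) = 0 -> N (E j) ^+ 2 <= eps.
Proof.
move=> h0.
have t1 := N_tri0 P X (hE j) (hD j).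
have a0 := N_ge0 P X (E j \- D j).
have x0 := N_ge0 P X (E j).
have ea := herr j.
rewrite h0 addr0 in t1.
by rewrite (le_trans _ ea) // ler_pXn2r // ?nnegrE.
Qed.

Lemma L1 j k dl : 0 < dl -> dl <= N (D j \- D k) -> eps <= dl ^+ 2 / 16 ->
  dl ^+ 2 / 4 <= N (E j \- E k) ^+ 2.
Proof.
move=> d0 hd he.
have t1 := N_tri P X (hD j) (hD k) (hE j).
have t2 := N_tri P X (hE j) (hD k) (hE k).
have s : N (D j \- E j) = N (E j \- D j) by apply: N_sym.
have a0 := N_ge0 P X (E j \- D j).
have b0 := N_ge0 P X (E k \- D k).
have x0 := N_ge0 P X (E j \- E k).
have ea := herr j; have eb := herr k.
have ha : N (E j \- D j) <= dl / 4 by nra.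
have hb : N (E k \- D k) <= dl / 4 by nra.
rewrite s in t1.
nra.
Qed.

Lemma L2 j dl : 0 < dl -> dl <= N (D j) -> eps <= dl ^+ 2 / 16 ->
  dl ^+ 2 / 4 <= N (E j) ^+ 2.
Proof.
move=> d0 hd he.
have t1 := N_tri0 P X (hD j) (hE j).
have s : N (D j \- E j) = N (E j \- D j) by apply: N_sym.
have a0 := N_ge0 P X (E j \- D j).
have x0 := N_ge0 P X (E j).
have ea := herr j.
have ha : N (E j \- D j) <= dl / 4 by nra.
rewrite s in t1.
nra.
Qed.
End Err.



Section Pow.
Context {R : realType}.


Lemma P1 (n : nat) (c x a1 a2 b : R) : (1 <= n)%N -> 0 < c -> c <= x -> 0 < a2 -> 0 < b ->
  c `^ b * n%:R `^ (Num.min a1 a2 * b) <= (n%:R `^ a2 * x) `^ b.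
Proof.
move=> n1 c0 cx a20 b0.
have n0 : (1 : R) <= n%:R by rewrite ler1n.
apply: (@le_trans _ _ ((n%:R `^ a2 * c) `^ b)); last first.
  apply: ge0_ler_powR; rewrite ?nnegrE ?mulr_ge0 ?powR_ge0 //; try lra.
  by apply: ler_wpM2l; rewrite ?powR_ge0.
rewrite powRM ?powR_ge0 ?(ltW c0) // -powRrM mulrC.
apply: ler_wpM2r; first exact: powR_ge0.
apply: ler_powR => //; apply: ler_wpM2r; [exact: ltW|by rewrite ge_min lexx orbT].
Qed.

Lemma Panti (x y b : R) : 0 < x -> x <= y -> 0 <= b -> y `^ (- b) <= x `^ (- b).
Proof.
move=> x0 xy b0; rewrite !powRN lef_pV2 ?posrE ?powR_gt0 //; last lra.
by apply: ge0_ler_powR; rewrite ?nnegrE //; lra.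
Qed.

Lemma P2 (n : nat) (K x a1 a2 b : R) : (1 <= n)%N -> 0 < K -> 0 < x ->
  x <= K * n%:R `^ (- a1) -> 0 < b ->
  K `^ (- b) * n%:R `^ (Num.min a1 a2 * b) <= x `^ (- b).
Proof.
move=> n1 K0 x0 xK b0.
have n0 : (1 : R) <= n%:R by rewrite ler1n.
apply: (le_trans _ (Panti _ _ _ x0 xK (ltW b0))).
rewrite powRM ?powR_ge0 ?(ltW K0) // -powRrM mulrNN.
apply: ler_wpM2l; first exact: powR_ge0.
apply: ler_powR => //; apply: ler_wpM2r; [exact: ltW|by rewrite ge_min lexx].
Qed.

Lemma P3 (n : nat) (K x a1 a2 b : R) : (1 <= n)%N -> 0 <= K -> 0 <= x ->
  x <= K * n%:R `^ (- a1) -> 0 < b ->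
  (n%:R `^ a2 * x) `^ b <= K `^ b * n%:R `^ ((a2 - a1) * b).
Proof.
move=> n1 K0 x0 xK b0.
have n0 : (0 : R) < n%:R by rewrite ltr0n.
apply: (@le_trans _ _ ((n%:R `^ a2 * (K * n%:R `^ (- a1))) `^ b)).
  apply: ge0_ler_powR; rewrite ?nnegrE ?mulr_ge0 ?powR_ge0 //; try lra.
  by apply: ler_wpM2l; rewrite ?powR_ge0.
rewrite mulrCA -powRD ?(gt_eqF n0) ?implybT // powRM ?powR_ge0 // powRrM.
by [].
Qed.
End Pow.

Section Ev.
Context {R : realType}.

Lemma eventually_small (C a1 t : R) : 0 < C -> 0 < a1 -> 0 < t ->
  exists N0 : nat, forall n : nat, (N0 <= n)%N ->
    (1 <= n)%N /\ C * n%:R `^ (- a1) <= t.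
Proof.
move=> C0 a0 t0.
set y := (C / t) `^ (a1^-1).
have y0 : 0 <= y by apply: powR_ge0.
exists (maxn 1 (Num.bound y)) => n; rewrite geq_max => /andP[n1 nb].
split => //.
have ny : y <= n%:R.
  apply: ltW; apply: (lt_le_trans (archi_boundP y0)); by rewrite ler_nat.
have n0 : (0 : R) < n%:R by rewrite ltr0n.
have na : C / t <= n%:R `^ a1.
  have -> : C / t = y `^ a1.
    by rewrite /y -powRrM mulVf ?powRr1 ?(gt_eqF a0) // divr_ge0 // ltW.
  by apply: ge0_ler_powR; rewrite ?nnegrE // ?ltW // ltW.
rewrite powRN -/(_ / _) ler_pdivrMr ?powR_gt0 //.
by rewrite -ler_pdivrMl // mulrC.
Qed.
End Ev.

Section What.
Context {R : realType} {d} {Omega : measurableType d} {T p : nat}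
  (P : probability Omega R) (X : Omega -> 'rV[R]_p)
  (par : 'I_T -> option 'I_T) (leaf : 'I_p -> 'I_T)
  (E : 'I_p -> 'rV[R]_p -> R) (n : nat) (a2 b : R) (v : 'I_T).
Local Notation W := (what P X par leaf E n a2 b v).
Local Notation c1 := (C1 P X par leaf E v).
Local Notation c2 := (C2 P X par leaf E v).
Local Notation c3 := (C3 P X par leaf E v).

Lemma negpow_ge0 (x : R) : (0 <= negpow x b)%E.
Proof. by rewrite /negpow; case: ifP => // _; rewrite lee_fin powR_ge0. Qed.

Lemma what_ge1 (c : R) : c <= (n%:R `^ a2 * c1) `^ b -> (c%:E <= W)%E.
Proof.
move=> h; rewrite /what -addeA.
by apply: lee_paddr; [apply: adde_ge0; apply: negpow_ge0|rewrite lee_fin].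
Qed.

Lemma what_ge2 (c : R) : (c2 != 0 -> c <= c2 `^ (- b)) -> (c%:E <= W)%E.
Proof.
move=> h; rewrite /what.
have z3 : negpow c3 b != -oo%E.
  by apply/negP => /eqP e; have := negpow_ge0 c3; rewrite e.
have [e|nz] := eqVneq c2 0.
  by rewrite /negpow e eqxx addey // addye ?leey.
rewrite {1}/negpow (negbTE nz).
apply: lee_paddr; first exact: negpow_ge0.
by apply: lee_paddl; [rewrite lee_fin powR_ge0|rewrite lee_fin h].
Qed.

Lemma what_ge3 (c : R) : (c3 != 0 -> c <= c3 `^ (- b)) -> (c%:E <= W)%E.
Proof.
move=> h; rewrite /what.
have z2 : ((n%:R `^ a2 * c1) `^ b)%:E + negpow c2 b != -oo%E.
  apply/negP => /eqP e.
  have : (0 <= ((n%:R `^ a2 * c1) `^ b)%:E + negpow c2 b)%E.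
    by apply: adde_ge0; [rewrite lee_fin powR_ge0|exact: negpow_ge0].
  by rewrite e.
have [e|nz] := eqVneq c3 0.
  by rewrite {2}/negpow e eqxx addey ?leey.
rewrite {2}/negpow (negbTE nz).
apply: lee_paddl; last by rewrite lee_fin h.
by apply: adde_ge0; [rewrite lee_fin powR_ge0|exact: negpow_ge0].
Qed.

Lemma what_fin : c2 != 0 -> c3 != 0 ->
  W = ((n%:R `^ a2 * c1) `^ b + c2 `^ (- b) + c3 `^ (- b))%:E.
Proof. by move=> h2 h3; rewrite /what /negpow (negbTE h2) (negbTE h3). Qed.
End What.



Section Prob.
Context {R : realType} {d} {Omega : measurableType d} (P : probability Omega R).

Lemma wp_mono (G A : nat -> set Omega) (N0 : nat) :
  wp_to_one P G -> (forall n w, (N0 <= n)%N -> G n w -> A n w) -> wp_to_one P A.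
Proof.
move=> [B [hB hc]] hGA.
exists (fun n => if (N0 <= n)%N then B n else set0); split.
  move=> n; case: ifP => hn; last by split.
  by have [mB sB] := hB n; split => // w /sB; apply: hGA.
apply: cvg_trans hc.
apply: near_eq_cvg; exists N0 => // n /= hn.
by rewrite hn.
Qed.

Lemma wp_O (G : nat -> set Omega) (Z : nat -> Omega -> \bar R) (r : nat -> R)
  (N0 : nat) (M : R) :
  wp_to_one P G -> (forall n w, (N0 <= n)%N -> G n w -> (`|Z n w| <= (M * r n)%:E)%E) ->
  O_in_prob P Z r.
Proof.
move=> [B [hB hc]] hGZ eps e0.
have [hfin hc'] := (fine_cvgP _ _).1 hc.
have := (cvgrPdist_lt _ _).1 hc' eps e0.
move=> [N1 _ HN1]; case: hfin => N2 _ HN2.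
exists M, (maxn N0 (maxn N1 N2)) => n; rewrite !geq_max => /and3P[n0 n1 n2].
have [mB sB] := hB n.
exists (B n); split => //.
  by move=> w /sB; apply: hGZ.
have f := HN2 n n2; have l := HN1 n n1.
rewrite -(fineK f) lee_fin.
move: l => /=; set y := fine _ => l.
have := ler_norm (1 - y); lra.
Qed.
End Prob.



Arguments C1_ge {R d Omega T p P X par leaf E v j k} _ _ _.
Arguments C2_ge {R d Omega T p P X par leaf E v j} _.
Arguments C3_ge {R d Omega T p P X par leaf E v j l} _ _.
Arguments C1_le {R d Omega T p P X par leaf E v K} _ _.
Arguments C2_le {R d Omega T p P X par leaf E v K} _ _.
Arguments C3_le {R d Omega T p P X par leaf E v K} _ _.
Arguments C1_ge0 {R d Omega T p P X par leaf E v}.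
Arguments C2_ge0 {R d Omega T p P X par leaf E v}.
Arguments C3_ge0 {R d Omega T p P X par leaf E v}.
Arguments U1 {R d Omega p P X E D eps} hE hD herr {j k} _.
Arguments U2 {R d Omega p P X E D eps} hE hD herr {j} _.
Arguments L1 {R d Omega p P X E D eps} hE hD herr {j k dl} _ _ _.
Arguments L2 {R d Omega p P X E D eps} hE hD herr {j dl} _ _ _.
Arguments P1 {R n c x a1 a2 b} _ _ _ _ _.
Arguments P2 {R n K x a1 a2 b} _ _ _ _ _.
Arguments P3 {R n K x a1 a2 b} _ _ _ _ _.
Arguments Panti {R x y b} _ _ _.
Arguments what_ge1 {R d Omega T p P X par leaf E n a2 b v c} _.
Arguments what_ge2 {R d Omega T p P X par leaf E n a2 b v c} _.
Arguments what_ge3 {R d Omega T p P X par leaf E n a2 b v c} _.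
Arguments what_fin {R d Omega T p P X par leaf E n a2 b v} _ _.

Theorem mainTheorem3 (R : realType) (d : measure_display) (Omega : measurableType d)
  (P : probability Omega R) (T p : nat)
  (par : 'I_T -> option 'I_T) (leaf : 'I_p -> 'I_T)
  (X : Omega -> 'rV[R]_p) (m : 'rV[R]_p -> R)
  (dhat : nat -> Omega -> 'I_p -> 'rV[R]_p -> R)
  (a1 C a2 b : R) :
  is_rooted_tree par -> leaves_identified par leaf ->
  (forall x, differentiable m x) ->
  (forall j, inL2 P X (partial m j)) ->
  (forall n w j, inL2 P X (dhat n w j)) ->
  0 < a1 -> 0 < C ->
  wp_to_one P (fun n => [set w | forall j : 'I_p,
     nrm2 P X (dhat n w j \- partial m j) ^+ 2 <= C * n%:R `^ (- a1)]) ->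
  0 < a2 -> 0 < b ->
  (forall v : 'I_T, ~ in_Istar P X par leaf (partial m) v ->
     exists c : R, 0 < c /\
       wp_to_one P (fun n => [set w |
         ((c * n%:R `^ (Num.min a1 a2 * b))%:E <=
            what P X par leaf (dhat n w) n a2 b v)%E])) /\
  (forall v : 'I_T, in_Istar P X par leaf (partial m) v ->
     O_in_prob P (fun n w => what P X par leaf (dhat n w) n a2 b v)
             (fun n => 1 + n%:R `^ ((a2 - a1) * b))).
Proof.
move=> _ _ _ hD hE a10 C0 hG a20 b0.
set D := partial m.
set G := (fun n => _) in hG.
set N := nrm2 P X.
have N0 := N_ge0 P X.
have eps0 : forall n : nat, 0 <= C * n%:R `^ (- a1).
  by move=> n; rewrite mulr_ge0 ?powR_ge0 // ltW.
split.
- move=> v notI.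
  set L := le_set par leaf v; set S := S_set par leaf v.
  have [hA|hA] := pselect (exists j k, [/\ j \in L, k \in L & N (D j \- D k) != 0]).
  +
    have [j [k [jL kL jk hjk]]] : exists j k, [/\ j \in L, k \in L, (j < k)%N &
        0 < N (D j \- D k)].
      case: hA => j [k [jL kL hne]].
      have hp : forall x y, N (D x \- D y) != 0 -> 0 < N (D x \- D y).
        by move=> x y h; rewrite lt_neqAle eq_sym h N0.
      case: (ltngtP j k) => h.
      * by exists j, k; split => //; apply: hp.
      * exists k, j; split => //; rewrite /N N_sym; exact: hp.
      * by move: hne; rewrite (val_inj h) /N N_self eqxx.
    set dl := N (D j \- D k) in hjk.
    have c1p : (1 < #|L|)%N.
      apply/card_gt1P; exists j, k; split => //.
      by apply/eqP => ejk; move: jk; rewrite ejk ltnn.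
    set c1 := ('C(#|L|, 2)%:R)^-1 * (dl ^+ 2 / 4).
    have c10 : 0 < c1.
      apply: mulr_gt0; last by rewrite divr_gt0 ?exprn_gt0.
      by rewrite invr_gt0 ltr0n bin_gt0.
    exists (c1 `^ b); split; first exact: powR_gt0.
    have [N1 hN1] := @eventually_small R C a1 (dl ^+ 2 / 16) C0 a10
      ltac:(by rewrite divr_gt0 ?exprn_gt0).
    apply: (wp_mono P _ _ N1 hG) => n w hn hw /=.
    have [n1 hsm] := hN1 n hn.
    apply: what_ge1.
    apply: P1 => //.
    apply: (le_trans _ (C1_ge jL kL jk)).
    apply: ler_wpM2l; first by rewrite invr_ge0.
    exact: (L1 (hE n w) hD hw hjk (lexx _) hsm).
  + have hA' : forall j k, j \in L -> k \in L -> N (D j \- D k) = 0.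
      move=> j k jL kL; apply/eqP; apply/negPn/negP => h.
      by apply: hA; exists j, k.
    have [hB|hB] := pselect (exists k, k \in L /\ N (D k) = 0).
    *
      have hall : forall j, j \in L -> N (D j) = 0.
        case: hB => k [kL hk] j jL; apply/eqP; rewrite eq_le N0 andbT.
        have := N_tri0 P X (hD j) (hD k); rewrite -/N hk (hA' j k) // addr0.
        done.
      set K := (p%:R + 1) * C : R.
      have K0 : 0 < K by rewrite /K mulr_gt0 // natr1 ltr0n.
      exists (K `^ (- b)); split; first exact: powR_gt0.
      apply: (wp_mono P _ _ 1%N hG) => n w hn hw /=.
      apply: what_ge2 => nz.
      apply: P2 => //.
        by rewrite lt_neqAle eq_sym nz C2_ge0.
      apply: (le_trans (C2_le (eps0 n) _)).
        by move=> j jL; apply: (U2 (hE n w) hD hw); apply: hall.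
      have q0 : 0 <= n%:R `^ (- a1) :> R by apply: powR_ge0.
      have pp : 0 <= p%:R :> R by [].
      rewrite /K; nra.
    *
      have hnz : forall j, j \in L -> N (D j) <> 0.
        by move=> j jL h; apply: hB; exists j.
      have hS : forall s j, s \in S -> j \in L -> N (D j \- D s) = 0.
        move=> s j sS jL; apply/eqP; apply/negPn/negP => h.
        apply: notI; split.
        - exact: hnz.
        - exact: hA'.
        - exists s, j; split => //; rewrite /N N_sym; exact/eqP.
      have pp4 : 0 <= p%:R * (p%:R * 4) :> R by rewrite !mulr_ge0.
      set K := (p%:R * (p%:R * 4) + 1) * C : R.
      have K0 : 0 < K.
        rewrite /K mulr_gt0 //; lra.
      exists (K `^ (- b)); split; first exact: powR_gt0.
      apply: (wp_mono P _ _ 1%N hG) => n w hn hw /=.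
      apply: what_ge3 => nz.
      apply: P2 => //.
        by rewrite lt_neqAle eq_sym nz C3_ge0.
      apply: (le_trans (@C3_le _ _ _ _ _ _ _ _ _ _ _ (4 * (C * n%:R `^ (- a1))) _ _)).
      * exact: (mulr_ge0 _ (eps0 n)).
      * by move=> j l jL lS; apply: (U1 (hE n w) hD hw); apply: hS.
      * have q0 : 0 <= n%:R `^ (- a1) :> R by apply: powR_ge0.
        rewrite /K.
        have -> : p%:R * (p%:R * (4 * (C * n%:R `^ (- a1)))) =
          (p%:R * (p%:R * 4)) * C * n%:R `^ (- a1) :> R by ring.
        apply: ler_wpM2r => //; apply: ler_wpM2r; [exact: ltW|lra].
- move=> v [hi hii [s [j [sS jL hsj]]]].
  set L := le_set par leaf v in hi hii jL; set S := S_set par leaf v in sS.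
  have hp : forall f, N f != 0 -> 0 < N f.
    by move=> f h; rewrite lt_neqAle eq_sym h N0.
  have d2 : 0 < N (D j) by apply: hp; apply/eqP; apply: hi.
  have d3 : 0 < N (D j \- D s) by apply: hp; rewrite /N N_sym; apply/eqP.
  set x2 := N (D j) in d2; set x3 := N (D j \- D s) in d3.
  set t := Num.min (x2 ^+ 2) (x3 ^+ 2) / 16.
  have t0 : 0 < t by rewrite divr_gt0 // lt_min !exprn_gt0.
  have t2 : t <= x2 ^+ 2 / 16 by rewrite ler_pM2r // ge_min lexx.
  have t3 : t <= x3 ^+ 2 / 16 by rewrite ler_pM2r // ge_min lexx orbT.
  have [N1 hN1] := @eventually_small R C a1 t C0 a10 t0.
  have cL : (0 < #|L|)%N by apply/card_gt0P; exists j.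
  have cS : (0 < #|S|)%N by apply/card_gt0P; exists s.
  set c2 := (#|L|%:R)^-1 * (x2 ^+ 2 / 4).
  set c3 := ((#|S| * #|L|)%:R)^-1 * (x3 ^+ 2 / 4).
  have c20 : 0 < c2 by rewrite mulr_gt0 ?invr_gt0 ?ltr0n ?divr_gt0 ?exprn_gt0.
  have c30 : 0 < c3.
    by rewrite mulr_gt0 ?invr_gt0 ?ltr0n ?muln_gt0 ?cS ?divr_gt0 ?exprn_gt0.
  set K := p%:R * (p%:R * (4 * C)) : R.
  have K0 : 0 <= K by rewrite /K !mulr_ge0 // ltW.
  apply: (wp_O P _ _ _ N1 (K `^ b + c2 `^ (- b) + c3 `^ (- b)) hG) => n w hn hw.
  have [n1 hsm] := hN1 n hn.
  have e2 : C * n%:R `^ (- a1) <= x2 ^+ 2 / 16 by apply: le_trans t2.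
  have e3 : C * n%:R `^ (- a1) <= x3 ^+ 2 / 16 by apply: le_trans t3.
  have hc2 : c2 <= C2 P X par leaf (dhat n w) v.
    apply: (le_trans _ (C2_ge jL)).
    apply: ler_wpM2l; first by rewrite invr_ge0.
    exact: (L2 (hE n w) hD hw d2 (lexx _) e2).
  have hc3 : c3 <= C3 P X par leaf (dhat n w) v.
    apply: (le_trans _ (C3_ge jL sS)).
    apply: ler_wpM2l; first by rewrite invr_ge0.
    exact: (L1 (hE n w) hD hw d3 (lexx _) e3).
  have hc1 : C1 P X par leaf (dhat n w) v <= K * n%:R `^ (- a1).
    apply: (le_trans (@C1_le _ _ _ _ _ _ _ _ _ _ _ (4 * (C * n%:R `^ (- a1))) _ _)).
    + exact: (mulr_ge0 _ (eps0 n)).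
    + by move=> j' k' jL' kL'; apply: (U1 (hE n w) hD hw); apply: hii.
    + have -> : p%:R * (p%:R * (4 * (C * n%:R `^ (- a1)))) =
          K * n%:R `^ (- a1) :> R by rewrite /K; ring.
      exact: lexx.
  rewrite what_fin; first last.
  - by apply/negP => /eqP h; move: hc3; rewrite h; lra.
  - by apply/negP => /eqP h; move: hc2; rewrite h; lra.
  have b1 := P3 n1 K0 C1_ge0 hc1 b0 (a2 := a2).
  have b2 := Panti c20 hc2 (ltW b0).
  have b3 := Panti c30 hc3 (ltW b0).
  have q0 : 0 <= n%:R `^ ((a2 - a1) * b) :> R by apply: powR_ge0.
  have y1 := @powR_ge0 _ (n%:R `^ a2 * C1 P X par leaf (dhat n w) v) b.
  have y2 := @powR_ge0 _ (C2 P X par leaf (dhat n w) v) (- b).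
  have y3 := @powR_ge0 _ (C3 P X par leaf (dhat n w) v) (- b).
  have k0 := @powR_ge0 _ K b.
  have k2 := @powR_ge0 _ c2 (- b).
  have k3 := @powR_ge0 _ c3 (- b).
  rewrite abse_EFin lee_fin ger0_norm; last by lra.
  nra.
Qed.
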